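(* Let $\eta_0,\eta_1,\eta_2,\dots$ be an effective enumeration of closed λ-terms with $\eta_i\twoheadrightarrow_{\beta\eta}\mathtt{I}$ for all $i$. Let $\mathbf{I}^\Omega$ and $\boldsymbol{\eta}^\Omega$ be closed λ-terms (defined via the fixed point combinator) such that $\mathbf{I}^\Omega yx=_\beta[y\Omega^{\sim n}x]_{n\in\mathbb{N}}=[yx,[y\Omega x,[y\Omega\Omega x,\dots]]]$ and $\boldsymbol{\eta}^\Omega yx=_\beta[y\Omega^{\sim n}(\eta_nx)]_{n\in\mathbb{N}}=[y(\eta_0x),[y\Omega(\eta_1x),[y\Omega\Omega(\eta_2x),\dots]]]$. Then $\mathcal{B}\omega\vdash\mathbf{I}^\Omega=\boldsymbol{\eta}^\Omega$.
   Context: $\mathtt{I}=\lambda x.x$, $\Omega=(\lambda x.xx)(\lambda x.xx)$, $M\Omega^{\sim n}$ denotes $M\Omega\cdots\Omega$ ($n$ copies). Pairs/tuples: $[M_1,\dots,M_n]=\lambda z.zM_1\cdots M_n$ with $z$ fresh. An enumeration $(M_n)_n$ of closed terms is effective if there is a closed $F$ with $F\,\underline{n}=_\beta M_n$ for all $n$, where $\underline n=\lambda fz.f^n(z)$ is the Church numeral; then the stream $[M_n]_{n\in\mathbb{N}}$ is a λ-term with $[M_n]_{n\in\mathbb{N}}=_\beta[M_0,[M_{n+1}]_{n\in\mathbb{N}}]$. $\mathcal{B}=\{(M,N):BT(M)=BT(N)\}$; the ω-rule: if $MP=NP$ for all closed $P$ then $M=N$; $\mathcal{B}\omega$ is the least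 λ-theory containing $\mathcal{B}$ closed under the ω-rule. *)

(* Defs.v *)
From Stdlib Require Import Arith List Relations.
Import ListNotations.

Inductive term : Type :=
| Var : nat -> term
| App : term -> term -> term
| Lam : term -> term.

Fixpoint lift (d c : nat) (t : term) : term :=
  match t with
  | Var n => if Nat.leb c n then Var (n + d) else Var n
  | App a b => App (lift d c a) (lift d c b)
  | Lam a => Lam (lift d (S c) a)
  end.

Fixpoint subst (k : nat) (u : term) (t : term) : term :=
  match t with
  | Var n => if Nat.eqb n k then lift k 0 u
             else if Nat.ltb k n then Var (pred n) else Var n
  | App a b => App (subst k u a) (subst k u b)
  | Lam a => Lam (subst (S k) u a)
  end.

Inductive beta : term -> term -> Prop :=
| beta_redex t u : beta (App (Lam t) u) (subst 0 u t)
| beta_appL a a' b : beta a a' -> beta (App a b) (App a' b)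
| beta_appR a b b' : beta b b' -> beta (App a b) (App a b')
| beta_lam a a' : beta a a' -> beta (Lam a) (Lam a').

Inductive eta : term -> term -> Prop :=
| eta_redex t : eta (Lam (App (lift 1 0 t) (Var 0))) t
| eta_appL a a' b : eta a a' -> eta (App a b) (App a' b)
| eta_appR a b b' : eta b b' -> eta (App a b) (App a b')
| eta_lam a a' : eta a a' -> eta (Lam a) (Lam a').

Definition beta_eta_step (a b : term) : Prop := beta a b \/ eta a b.

Definition bered : term -> term -> Prop := clos_refl_trans term beta_eta_step.

Definition beq : term -> term -> Prop := clos_refl_sym_trans term beta.

Fixpoint closed_at (k : nat) (t : term) : Prop :=
  match t with
  | Var n => n < k
  | App a b => closed_at k a /\ closed_at k b
  | Lam a => closed_at (S k) a
  end.

Definition closed (t : term) : Prop := closed_at 0 t.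

Definition apps (h : term) (l : list term) : term := fold_left App l h.

Fixpoint lams (n : nat) (t : term) : term :=
  match n with 0 => t | S m => Lam (lams m t) end.

Definition I_comb : term := Lam (Var 0).
Definition omega_small : term := Lam (App (Var 0) (Var 0)).
Definition Omega : term := App omega_small omega_small.

Fixpoint app_Omega (M : term) (n : nat) : term :=
  match n with 0 => M | S m => App (app_Omega M m) Omega end.

Definition church (n : nat) : term :=
  Lam (Lam (Nat.iter n (App (Var 1)) (Var 0))).

Definition church_succ : term :=
  Lam (Lam (Lam (App (Var 1) (App (App (Var 2) (Var 1)) (Var 0))))).

Definition pair (M1 M2 : term) : term :=
  Lam (App (App (Var 0) (lift 1 0 M1)) (lift 1 0 M2)).

Definition Theta_half : term :=
  Lam (Lam (App (Var 0) (App (App (Var 1) (Var 1)) (Var 0)))).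
Definition Theta : term := App Theta_half Theta_half.

(* The stream [M_n]_{n} built from a term F enumerating M_n (F n =_beta M_n):
   stream F := Theta (\s m. [F m, s (succ m)]) 0,
   so that stream F =_beta [M_0, [M_{n+1}]_n]. *)
Definition stream (F : term) : term :=
  App (App Theta
           (Lam (Lam (pair (App (lift 2 0 F) (Var 0))
                           (App (Var 1) (App church_succ (Var 0)))))))
      (church 0).

Definition effective (M : nat -> term) : Prop :=
  exists F, closed F /\ forall n, beq (App F (church n)) (M n).

Definition has_hnf (M : term) : Prop :=
  exists n y args, beq M (lams n (apps (Var y) args)).

(* Equality of Boehm trees, BT(M) = BT(N), as coinductive equality of trees *)
CoInductive BTeq : term -> term -> Prop :=
| bt_bot M N : ~ has_hnf M -> ~ has_hnf N -> BTeq M N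
| bt_node M N n y l1 l2 :
    beq M (lams n (apps (Var y) l1)) ->
    beq N (lams n (apps (Var y) l2)) ->
    length l1 = length l2 ->
    (forall i, i < length l1 -> BTeq (nth i l1 (Var 0)) (nth i l2 (Var 0))) ->
    BTeq M N.

Inductive Bomega : term -> term -> Prop :=
| bw_B M N : BTeq M N -> Bomega M N
| bw_refl M : Bomega M M
| bw_sym M N : Bomega M N -> Bomega N M
| bw_trans M N P : Bomega M N -> Bomega N P -> Bomega M P
| bw_app M M' N N' : Bomega M M' -> Bomega N N' -> Bomega (App M N) (App M' N')
| bw_lam M N : Bomega M N -> Bomega (Lam M) (Lam N)
| bw_omega M N : (forall P, closed P -> Bomega (App M P) (App N P)) -> Bomega M N.

(* Main.v *)
Require Import Defs.
From Stdlib Require Import Arith List Relations Lia Classical.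
Import ListNotations.

Ltac cmp := repeat match goal with
  | |- context [?a =? ?b] => destruct (Nat.eqb_spec a b)
  | |- context [?a <? ?b] => destruct (Nat.ltb_spec a b)
  | |- context [?a <=? ?b] => destruct (Nat.leb_spec a b)
  end.

Definition upr (r : nat -> nat) (n : nat) : nat :=
  match n with 0 => 0 | S m => S (r m) end.

Fixpoint ren (r : nat -> nat) (t : term) : term :=
  match t with
  | Var n => Var (r n)
  | App a b => App (ren r a) (ren r b)
  | Lam a => Lam (ren (upr r) a)
  end.

Definition up (s : nat -> term) (n : nat) : term :=
  match n with 0 => Var 0 | S m => ren S (s m) end.

Fixpoint inst (s : nat -> term) (t : term) : term :=
  match t with
  | Var n => s n
  | App a b => App (inst s a) (inst s b)
  | Lam a => Lam (inst (up s) a)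
  end.

Lemma ren_ext t : forall r r', (forall n, r n = r' n) -> ren r t = ren r' t.
Proof.
  induction t; intros r r' H; simpl; f_equal; auto.
  apply IHt; intros [|n]; simpl; auto.
Qed.

Lemma inst_ext t : forall s s', (forall n, s n = s' n) -> inst s t = inst s' t.
Proof.
  induction t; intros s s' H; simpl; f_equal; auto.
  apply IHt; intros [|n]; simpl; auto. rewrite H; auto.
Qed.

Lemma ren_ren t : forall r1 r2, ren r2 (ren r1 t) = ren (fun n => r2 (r1 n)) t.
Proof.
  induction t; intros r1 r2; simpl; f_equal; auto.
  rewrite IHt. apply ren_ext; intros [|n]; reflexivity.
Qed.

Lemma inst_ren t : forall s r, inst s (ren r t) = inst (fun n => s (r n)) t.
Proof.
  induction t; intros s r; simpl; f_equal; auto.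
  rewrite IHt. apply inst_ext; intros [|n]; reflexivity.
Qed.

Lemma ren_inst t : forall s r, ren r (inst s t) = inst (fun n => ren r (s n)) t.
Proof.
  induction t; intros s r; simpl; f_equal; auto.
  rewrite IHt. apply inst_ext; intros [|n]; simpl; auto.
  rewrite !ren_ren. reflexivity.
Qed.

Lemma inst_inst t : forall s s2, inst s2 (inst s t) = inst (fun n => inst s2 (s n)) t.
Proof.
  induction t; intros s s2; simpl; f_equal; auto.
  rewrite IHt. apply inst_ext; intros [|n]; simpl; auto.
  rewrite inst_ren, ren_inst. reflexivity.
Qed.

Lemma inst_var t : forall s, (forall n, s n = Var n) -> inst s t = t.
Proof.
  induction t; intros s H; simpl; f_equal; auto.
  apply IHt; intros [|n]; simpl; auto. rewrite H; reflexivity.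
Qed.

Lemma ren_as_inst t : forall r, ren r t = inst (fun n => Var (r n)) t.
Proof.
  induction t; intros r; simpl; f_equal; auto.
  rewrite IHt. apply inst_ext; intros [|n]; reflexivity.
Qed.

Definition shf d c n := if c <=? n then n + d else n.

Lemma lift_ren t : forall d c, lift d c t = ren (shf d c) t.
Proof.
  induction t; intros d c; simpl; try (f_equal; auto; fail).
  - unfold shf. destruct (c <=? n); reflexivity.
  - f_equal. rewrite IHt. apply ren_ext; intros [|n]; unfold shf; simpl; auto.
    destruct (c <=? n); reflexivity.
Qed.

Definition sk k u n := if n =? k then lift k 0 u else if k <? n then Var (pred n) else Var n.

Lemma subst_inst t : forall k u, subst k u t = inst (sk k u) t.
Proof.
  induction t; intros k u; simpl; try (f_equal; auto; fail).
  f_equal. rewrite IHt. apply inst_ext; intros [|n]; unfold sk; simpl; cmp; try lia; auto.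
  - subst. rewrite !lift_ren, ren_ren. apply ren_ext; intro; unfold shf; cmp; lia.
  - simpl. f_equal. lia.
Qed.

Lemma lift0 t : forall c, lift 0 c t = t.
Proof.
  intros; rewrite lift_ren, ren_as_inst. apply inst_var; intro; unfold shf; cmp; f_equal; lia.
Qed.

Lemma subst_lift_cancel t : forall d c k u, c <= k -> k <= c + d ->
  subst k u (lift (S d) c t) = lift d c t.
Proof.
  intros. rewrite subst_inst, !lift_ren, inst_ren, ren_as_inst.
  apply inst_ext; intro n; unfold sk, shf; cmp; try (f_equal; lia); lia.
Qed.

Lemma subst_lift_comm t : forall e j u, subst (e + j) u (lift e 0 t) = lift e 0 (subst j u t).
Proof.
  intros. rewrite !subst_inst, !lift_ren, inst_ren, ren_inst.
  apply inst_ext; intro n; unfold sk, shf; simpl; cmp; simpl; try (f_equal; lia); try lia.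
  all: subst; rewrite !lift_ren, ren_ren; apply ren_ext; intro; unfold shf; simpl; cmp; lia.
Qed.

Lemma lift_lift_comm t : forall d e c, lift d (e + c) (lift e 0 t) = lift e 0 (lift d c t).
Proof.
  intros. rewrite !lift_ren, !ren_ren. apply ren_ext; intro; unfold shf; cmp; lia.
Qed.

Lemma subst_lams k : forall j u t, subst j u (lams k t) = lams k (subst (k + j) u t).
Proof.
  induction k; intros; simpl; auto. f_equal. rewrite IHk. f_equal. f_equal. lia.
Qed.

Definition scons (u : term) (s : nat -> term) n := match n with 0 => u | S m => s m end.

Lemma inst_subst0 a : forall s b, inst s (subst 0 b a) = subst 0 (inst s b) (inst (up s) a).
Proof.
  intros. rewrite !subst_inst, !inst_inst. apply inst_ext; intros [|n]; unfold sk; simpl.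
  - rewrite !lift0. reflexivity.
  - rewrite inst_ren. symmetry. apply inst_var. intro; unfold sk; cmp; f_equal; lia.
Qed.

Lemma subst0_up a : forall s b, subst 0 b (inst (up s) a) = inst (scons b s) a.
Proof.
  intros. rewrite !subst_inst, !inst_inst. apply inst_ext; intros [|n]; unfold sk; simpl.
  - rewrite lift0. reflexivity.
  - rewrite inst_ren. apply inst_var. intro; unfold sk; cmp; f_equal; lia.
Qed.

Lemma ren_subst0 a : forall r b, ren r (subst 0 b a) = subst 0 (ren r b) (ren (upr r) a).
Proof.
  intros. rewrite !(ren_as_inst _ r), (ren_as_inst _ (upr r)), inst_subst0.
  f_equal. apply inst_ext; intros [|n]; reflexivity.
Qed.

Lemma lift_subst0 a : forall d c b, lift d c (subst 0 b a) = subst 0 (lift d c b) (lift d (S c) a).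
Proof.
  intros. rewrite !lift_ren, ren_subst0. f_equal. apply ren_ext; intros [|n]; unfold shf; simpl; cmp; lia.
Qed.

Lemma subst_subst0 a : forall k u b, subst k u (subst 0 b a) = subst 0 (subst k u b) (subst (S k) u a).
Proof.
  intros. rewrite (subst_inst (subst 0 b a)), inst_subst0, <- !subst_inst.
  f_equal. rewrite subst_inst. apply inst_ext; intros [|n]; unfold sk; simpl; cmp; try lia; auto.
  - subst. rewrite !lift_ren, ren_ren. apply ren_ext; intro; unfold shf; cmp; lia.
  - simpl. f_equal. lia.
Qed.
Lemma closed_inst t : forall k s, closed_at k t -> (forall n, n < k -> s n = Var n) -> inst s t = t.
Proof.
  induction t; intros k s Hc H; simpl in *.
  - auto.
  - destruct Hc; f_equal; eauto.
  - f_equal. apply (IHt (S k)); auto. intros [|n] Hn; simpl; auto.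
    rewrite H by lia. reflexivity.
Qed.

Lemma closed_lift t k d c : closed_at k t -> k <= c -> lift d c t = t.
Proof.
  intros. rewrite lift_ren, ren_as_inst. apply (closed_inst _ k); auto.
  intros; unfold shf; cmp; f_equal; lia.
Qed.

Lemma closed_subst t k j u : closed_at k t -> k <= j -> subst j u t = t.
Proof.
  intros. rewrite subst_inst. apply (closed_inst _ k); auto.
  intros; unfold sk; cmp; f_equal; lia.
Qed.

Lemma closed_ren t : forall k k' r, closed_at k t -> (forall n, n < k -> r n < k') -> closed_at k' (ren r t).
Proof.
  induction t; intros k k' r Hc H; simpl in *; auto.
  - destruct Hc; split; eauto.
  - apply (IHt (S k)); auto. intros [|n] Hn; simpl; [lia|]. specialize (H n). lia.
Qed.

Lemma closed_inst2 t : forall k k' s, closed_at k t -> (forall n, n < k -> closed_at k' (s n)) -> closed_at k' (inst s t).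
Proof.
  induction t; intros k k' s Hc H; simpl in *; auto.
  - destruct Hc; split; eauto.
  - apply (IHt (S k)); auto. intros [|n] Hn; simpl; try lia.
    apply (closed_ren _ k'). apply H; lia. intros; lia.
Qed.

Lemma closed_subst0 a b k : closed_at (S k) a -> closed_at k b -> closed_at k (subst 0 b a).
Proof.
  intros. rewrite subst_inst. apply (closed_inst2 _ (S k)); auto.
  intros n Hn; unfold sk; cmp; subst; simpl; try lia.
  rewrite lift0; auto.
Qed.

Inductive par : term -> term -> Prop :=
| p_var n : par (Var n) (Var n)
| p_lam a a' : par a a' -> par (Lam a) (Lam a')
| p_app a a' b b' : par a a' -> par b b' -> par (App a b) (App a' b')
| p_beta a a' b b' : par a a' -> par b b' -> par (App (Lam a) b) (subst 0 b' a').

Lemma par_refl t : par t t.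
Proof. induction t; constructor; auto. Qed.

Lemma par_ren a a' : par a a' -> forall r, par (ren r a) (ren r a').
Proof.
  induction 1; intros r; simpl; try constructor; auto.
  rewrite ren_subst0. constructor; auto.
Qed.

Lemma par_inst a a' : par a a' -> forall s s', (forall n, par (s n) (s' n)) -> par (inst s a) (inst s' a').
Proof.
  induction 1; intros s s' Hs; simpl; try constructor; auto.
  - apply IHpar. intros [|n]; simpl. constructor. apply par_ren; auto.
  - rewrite inst_subst0. constructor; auto.
    apply IHpar1. intros [|n]; simpl. constructor. apply par_ren; auto.
Qed.

Lemma par_subst0 a a' b b' : par a a' -> par b b' -> par (subst 0 b a) (subst 0 b' a').
Proof.
  intros. rewrite !subst_inst. apply par_inst; auto.
  intros n; unfold sk; cmp; try rewrite !lift0; auto; constructor.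
Qed.

Fixpoint dev (t : term) : term :=
  match t with
  | Var n => Var n
  | Lam a => Lam (dev a)
  | App a b => match a with
               | Lam a0 => subst 0 (dev b) (dev a0)
               | _ => App (dev a) (dev b)
               end
  end.

Lemma par_dev a a' : par a a' -> par a' (dev a).
Proof.
  induction 1; simpl; try constructor; auto.
  - destruct a; try (constructor; auto; fail).
    inversion H; subst. inversion IHpar1; subst. constructor; auto.
  - apply par_subst0; auto.
Qed.

Definition pars := clos_refl_trans_1n term par.

Lemma strip a b c : par a b -> pars a c -> exists d, pars b d /\ par c d.
Proof.
  intros Hab Hac. revert b Hab. induction Hac; intros b Hab.
  - exists b. split. constructor. auto.
  - destruct (IHHac (dev x)) as [d [H1 H2]]. apply par_dev; auto.
    exists d; split; auto. econstructor. apply par_dev; eauto. auto.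
Qed.

Lemma pars_trans a b c : pars a b -> pars b c -> pars a c.
Proof. induction 1; intros; auto. eapply Relation_Operators.rt1n_trans. exact H. apply IHclos_refl_trans_1n; auto. Qed.

Lemma confl a b c : pars a b -> pars a c -> exists d, pars b d /\ pars c d.
Proof.
  intros Hab. revert c. induction Hab; intros c Hac.
  - exists c; split; auto. constructor.
  - destruct (strip _ _ _ H Hac) as [d [H1 H2]].
    destruct (IHHab d H1) as [e [H3 H4]].
    exists e; split; auto. econstructor; eauto.
Qed.

Lemma beta_par a b : beta a b -> par a b.
Proof. induction 1; constructor; auto using par_refl. Qed.

Lemma beq_cr a b : beq a b -> exists c, pars a c /\ pars b c.
Proof.
  induction 1.
  - exists y. split. econstructor. apply beta_par; eauto. constructor. constructor.
  - exists x; split; constructor.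
  - destruct IHclos_refl_sym_trans as [c [? ?]]; eauto.
  - destruct IHclos_refl_sym_trans1 as [c [? ?]], IHclos_refl_sym_trans2 as [d [? ?]].
    destruct (confl _ _ _ H2 H3) as [e [? ?]].
    exists e; split; eapply pars_trans; eauto.
Qed.
Definition notLam (t : term) : Prop := match t with Lam _ => False | _ => True end.

Inductive hstep : term -> term -> Prop :=
| h_beta a b : hstep (App (Lam a) b) (subst 0 b a)
| h_app a a' b : hstep a a' -> notLam a -> hstep (App a b) (App a' b)
| h_lam a a' : hstep a a' -> hstep (Lam a) (Lam a').

Inductive wh : term -> term -> Prop :=
| wh_beta a b : wh (App (Lam a) b) (subst 0 b a)
| wh_app a a' b : wh a a' -> wh (App a b) (App a' b).

Definition whs := clos_refl_trans_1n term wh.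
Definition hs := clos_refl_trans_1n term hstep.

Inductive ai : term -> term -> Prop :=
| ai_var n : ai (Var n) (Var n)
| ai_redex a a' b b' : par a a' -> par b b' -> ai (App (Lam a) b) (App (Lam a') b')
| ai_app a a' b b' : ai a a' -> par b b' -> ai (App a b) (App a' b').

Inductive wi : term -> term -> Prop :=
| wi_lam a a' : par a a' -> wi (Lam a) (Lam a')
| wi_ai a a' : ai a a' -> wi a a'.

Definition std M N := exists Z, whs M Z /\ wi Z N.

Lemma wh_notLam a a' : wh a a' -> notLam a.
Proof. inversion 1; simpl; auto. Qed.

Lemma wh_h a a' : wh a a' -> hstep a a'.
Proof. induction 1; constructor; auto. eapply wh_notLam; eauto. Qed.

Lemma whs_hs a a' : whs a a' -> hs a a'.
Proof. induction 1. constructor. eapply Relation_Operators.rt1n_trans. apply wh_h; eauto. auto. Qed.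

Lemma whs_app a a' b : whs a a' -> whs (App a b) (App a' b).
Proof. induction 1. constructor. eapply Relation_Operators.rt1n_trans. apply wh_app; eauto. auto. Qed.

Lemma hs_lam a a' : hs a a' -> hs (Lam a) (Lam a').
Proof. induction 1. constructor. eapply Relation_Operators.rt1n_trans. apply h_lam; eauto. auto. Qed.

Lemma hs_trans a b c : hs a b -> hs b c -> hs a c.
Proof. induction 1; intros; auto. eapply Relation_Operators.rt1n_trans. exact H. apply IHclos_refl_trans_1n; auto. Qed.

Lemma whs_hs_trans a b c : whs a b -> hs b c -> hs a c.
Proof. intros; eapply hs_trans; eauto. apply whs_hs; auto. Qed.

Lemma ai_notLam_l a a' : ai a a' -> notLam a.
Proof. inversion 1; simpl; auto. Qed.
Lemma ai_notLam_r a a' : ai a a' -> notLam a'.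
Proof. inversion 1; simpl; auto. Qed.

Lemma ai_par a a' : ai a a' -> par a a'.
Proof. induction 1; repeat constructor; auto. Qed.

Lemma wi_par a a' : wi a a' -> par a a'.
Proof. destruct 1. constructor; auto. apply ai_par; auto. Qed.

Lemma wh_ren a a' : wh a a' -> forall r, wh (ren r a) (ren r a').
Proof. induction 1; intros; simpl. rewrite ren_subst0. constructor. constructor; auto. Qed.

Lemma whs_ren a a' : whs a a' -> forall r, whs (ren r a) (ren r a').
Proof. induction 1; intros. constructor. eapply Relation_Operators.rt1n_trans. apply wh_ren; eauto. apply IHclos_refl_trans_1n. Qed.

Lemma ai_ren a a' : ai a a' -> forall r, ai (ren r a) (ren r a').
Proof. induction 1; intros; simpl; constructor; auto using par_ren.
Qed.

Lemma wi_ren a a' : wi a a' -> forall r, wi (ren r a) (ren r a').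
Proof. destruct 1; intros; simpl. constructor. apply par_ren; auto. constructor; apply ai_ren; auto. Qed.

Lemma std_ren a a' r : std a a' -> std (ren r a) (ren r a').
Proof. intros [Z [H1 H2]]. exists (ren r Z). split. apply whs_ren; auto. apply wi_ren; auto. Qed.

Lemma std_inst A A' : par A A' -> forall s s', (forall n, par (s n) (s' n)) ->
  (forall n, std (s n) (s' n)) -> std (inst s A) (inst s' A').
Proof.
  induction 1; intros s s' Hp Hs; simpl.
  - auto.
  - exists (Lam (inst (up s) a)). split. constructor. constructor.
    apply par_inst; auto. intros [|n]; simpl. constructor. apply par_ren; auto.
  - destruct (IHpar1 s s' Hp Hs) as [Z [H1 H2]].
    exists (App Z (inst s b)). split. apply whs_app; auto.
    assert (par (inst s b) (inst s' b')) by (apply par_inst; auto).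
    destruct H2. constructor. constructor; auto. constructor. constructor; auto.
  - assert (Hb : par (inst s b) (inst s' b')) by (apply par_inst; auto).
    destruct (IHpar1 (scons (inst s b) s) (scons (inst s' b') s')) as [Z [H1 H2]].
    + intros [|n]; simpl; auto.
    + intros [|n]; simpl; auto.
    + exists Z. split.
      * econstructor. apply wh_beta. rewrite subst0_up. auto.
      * rewrite inst_subst0, subst0_up. auto.
Qed.

Lemma par_std M N : par M N -> std M N.
Proof.
  intros H. rewrite <- (inst_var M Var), <- (inst_var N Var) by auto.
  apply std_inst; auto. intros; constructor.
  intros; exists (Var n). split. constructor. constructor; constructor.
Qed.

Lemma AI Z N : ai Z N -> forall N1, hstep N N1 -> exists Z', hstep Z Z' /\ par Z' N1.
Proof.
  induction 1; intros N1 Hs.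
  - inversion Hs.
  - inversion Hs; subst.
    + exists (subst 0 b a). split. constructor. apply par_subst0; auto.
    + match goal with Hn : notLam (Lam _) |- _ => simpl in Hn; contradiction end.
  - inversion Hs; subst.
    + apply ai_notLam_r in H. simpl in H. contradiction.
    + match goal with Hh : hstep a' _ |- _ => rename Hh into H4 end. destruct (IHai _ H4) as [Z' [? ?]]. exists (App Z' b). split.
      constructor; auto. eapply ai_notLam_l; eauto. constructor; auto.
Qed.

Lemma W N N1 : hstep N N1 -> forall M, par M N -> exists M', hs M M' /\ par M' N1.
Proof.
  intros Hs. induction Hs; intros M HM; destruct (par_std _ _ HM) as [Z [HZ1 HZ2]].
  - inversion HZ2; subst.
    destruct (AI _ _ H _ (h_beta a b)) as [Z' [? ?]].
    exists Z'. split; auto. eapply whs_hs_trans; eauto. econstructor; eauto. constructor.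
  - inversion HZ2; subst.
    destruct (AI _ _ H0 _ (h_app _ _ b Hs H)) as [Z' [? ?]].
    exists Z'. split; auto. eapply whs_hs_trans; eauto. econstructor; eauto. constructor.
  - inversion HZ2; subst.
    + match goal with Hp : par _ a |- _ => destruct (IHHs _ Hp) as [z' [? ?]] end. exists (Lam z'). split.
      eapply whs_hs_trans; eauto. apply hs_lam; auto. constructor; auto.
    + match goal with Ha : ai _ _ |- _ => apply ai_notLam_r in Ha; simpl in Ha; contradiction end.
Qed.

Lemma Wstar N G : hs N G -> forall M, par M N -> exists M', hs M M' /\ par M' G.
Proof.
  induction 1; intros M HM.
  - exists M; split; auto. constructor.
  - destruct (W _ _ H _ HM) as [M1 [? ?]].
    destruct (IHclos_refl_trans_1n _ H2) as [M2 [? ?]].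
    exists M2; split; auto. eapply hs_trans; eauto.
Qed.

Definition hnfS t := exists n y l, t = lams n (apps (Var y) l).

Lemma apps_snoc h l a : apps h (l ++ [a]) = App (apps h l) a.
Proof. unfold apps. rewrite fold_left_app. reflexivity. Qed.

Lemma apps_notLam y l : notLam (apps (Var y) l).
Proof. destruct l using rev_ind. simpl; auto. rewrite apps_snoc. simpl; auto. Qed.

Lemma app_apps_inv X b y l : App X b = apps (Var y) l -> exists l0, l = l0 ++ [b] /\ X = apps (Var y) l0.
Proof.
  destruct l using rev_ind; intros H. simpl in H; discriminate.
  rewrite apps_snoc in H. inversion H; subst. eauto.
Qed.

Lemma ai_apps_inv Z N : ai Z N -> forall y l, N = apps (Var y) l -> exists l', Z = apps (Var y) l'.
Proof.
  induction 1; intros y l HN.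
  - destruct l using rev_ind. simpl in HN. inversion HN; subst. exists []; auto.
    rewrite apps_snoc in HN; discriminate.
  - apply app_apps_inv in HN. destruct HN as [l0 [_ HX]].
    pose proof (apps_notLam y l0). rewrite <- HX in H1. simpl in H1; contradiction.
  - apply app_apps_inv in HN. destruct HN as [l0 [_ HX]].
    destruct (IHai _ _ HX) as [l' ->]. exists (l' ++ [b]). rewrite apps_snoc; auto.
Qed.

Lemma lemX n : forall M y l, par M (lams n (apps (Var y) l)) -> exists G, hs M G /\ hnfS G.
Proof.
  induction n; intros M y l HM; destruct (par_std _ _ HM) as [Z [HZ1 HZ2]]; simpl in HZ2.
  - remember (apps (Var y) l) as N eqn:EN. destruct HZ2 as [a a' Hp|a a' Hai].
    + pose proof (apps_notLam y l) as H; rewrite <- EN in H; simpl in H; contradiction.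
    + destruct (ai_apps_inv _ _ Hai _ _ EN) as [l' ->].
      exists (apps (Var y) l'). split. apply whs_hs; auto. exists 0, y, l'. auto.
  - remember (Lam (lams n (apps (Var y) l))) as N eqn:EN. destruct HZ2 as [a a' Hp|a a' Hai].
    + injection EN; intros; subst.
      destruct (IHn _ _ _ Hp) as [G [? [n' [y' [l' ->]]]]].
      exists (Lam (lams n' (apps (Var y') l'))). split.
      eapply whs_hs_trans; eauto. apply hs_lam; auto. exists (S n'), y', l'. auto.
    + apply ai_notLam_r in Hai. subst. simpl in Hai; contradiction.
Qed.

Lemma thmU M C : pars M C -> hnfS C -> exists G, hs M G /\ hnfS G.
Proof.
  induction 1; intros HC.
  - exists x; split; auto. constructor.
  - destruct (IHclos_refl_trans_1n HC) as [G [HG1 HG2]].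
    destruct (Wstar _ _ HG1 _ H) as [M' [? ?]].
    destruct HG2 as [n [y' [l ->]]].
    destruct (lemX _ _ _ _ H2) as [G' [? ?]].
    exists G'; split; auto. eapply hs_trans; eauto.
Qed.

Lemma par_hnf n : forall y l X, par (lams n (apps (Var y) l)) X -> exists l', X = lams n (apps (Var y) l').
Proof.
  induction n; intros y l X H; simpl in *.
  - revert X H. induction l using rev_ind; intros X H.
    + simpl in H. inversion H; subst. exists []; auto.
    + rewrite apps_snoc in H. remember (apps (Var y) l) as A eqn:EA.
      pose proof (apps_notLam y l) as NL. rewrite <- EA in NL.
      clear EA. inversion H as [|? ? ?|a0 a' b0 b' Ha Hb E1 E2|a0 a' b0 b' Ha Hb E1 E2].
      * subst. destruct (IHl _ Ha) as [l' ->].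
        exists (l' ++ [b']). rewrite apps_snoc; auto.
      * subst. simpl in NL; contradiction.
  - inversion H; subst. destruct (IHn _ _ _ H1) as [l' ->]. exists l'; auto.
Qed.

Lemma pars_hnf X Y : pars X Y -> hnfS X -> hnfS Y.
Proof.
  induction 1; auto. intros [n [y' [l ->]]].
  destruct (par_hnf _ _ _ _ H) as [l' ->]. apply IHclos_refl_trans_1n. exists n, y', l'; auto.
Qed.

CoInductive inf_h : term -> Prop :=
| ih M M' : hstep M M' -> inf_h M' -> inf_h M.

Lemma hstep_det M M1 : hstep M M1 -> forall M2, hstep M M2 -> M1 = M2.
Proof.
  induction 1; intros M2 H2; inversion H2; subst; auto.
  - simpl in H4; contradiction.
  - simpl in H0; contradiction.
  - f_equal; auto.
  - f_equal; auto.
Qed.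

Lemma apps_nostep y l : forall X, ~ hstep (apps (Var y) l) X.
Proof.
  induction l using rev_ind; intros X H.
  - inversion H.
  - rewrite apps_snoc in H. inversion H; subst.
    + pose proof (apps_notLam y l). rewrite <- H1 in H0. simpl in H0; contradiction.
    + eapply IHl; eauto.
Qed.

Lemma hnf_nostep G X : hnfS G -> ~ hstep G X.
Proof.
  intros [n [y [l ->]]]. revert X. induction n; intros X H; simpl in *.
  - eapply apps_nostep; eauto.
  - inversion H; subst. eapply IHn; eauto.
Qed.

Lemma hnf_not_inf M : has_hnf M -> inf_h M -> False.
Proof.
  intros [n [y [l Hb]]] Hinf.
  destruct (beq_cr _ _ Hb) as [C [H1 H2]].
  assert (hnfS C) by (eapply pars_hnf; eauto; exists n, y, l; auto).
  destruct (thmU _ _ H1 H) as [G [HG1 HG2]].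
  clear - HG1 HG2 Hinf. induction HG1.
  - destruct Hinf. eapply hnf_nostep; eauto.
  - destruct Hinf. apply IHHG1; auto. rewrite (hstep_det _ _ H _ H0). auto.
Qed.
Lemma hstep_notLam a a' : hstep a a' -> notLam a -> forall s, notLam (inst s a).
Proof. destruct a; simpl; intros H; auto. inversion H. Qed.

Lemma hstep_inst a a' : hstep a a' -> forall s, hstep (inst s a) (inst s a').
Proof.
  induction 1; intros s; simpl.
  - rewrite inst_subst0. constructor.
  - constructor; auto. eapply hstep_notLam; eauto.
  - constructor; auto.
Qed.

Lemma hstep_ren a a' r : hstep a a' -> hstep (ren r a) (ren r a').
Proof. intros; rewrite !ren_as_inst; apply hstep_inst; auto. Qed.

Lemma inf_inst : forall a s, inf_h a -> inf_h (inst s a).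
Proof.
  cofix CH. intros a s H. destruct H as [a a' Hs H].
  apply (ih _ (inst s a')). apply hstep_inst; auto. apply CH; auto.
Qed.

Lemma inf_ren a r : inf_h a -> inf_h (ren r a).
Proof. intros; rewrite ren_as_inst; apply inf_inst; auto. Qed.

Lemma inf_lam_inv : forall t, inf_h (Lam t) -> inf_h t.
Proof.
  cofix CH. intros t H. inversion H as [M M' Hs H1 E]; subst.
  inversion Hs; subst. eapply ih; [eassumption|]. apply CH; auto.
Qed.

Lemma inf_app : forall M N, inf_h M -> inf_h (App M N).
Proof.
  cofix CH. intros M N H. destruct M as [n|a b|t].
  - inversion H as [M M' Hs H1 E]. inversion Hs.
  - inversion H as [M M' Hs H1 E]; subst. apply (ih _ (App M' N)). constructor; simpl; auto. apply CH; auto.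
  - apply (ih _ (subst 0 N t)). constructor. rewrite subst_inst. apply inf_inst. apply inf_lam_inv; auto.
Qed.

Lemma beq_map (f : term -> term) : (forall x y, beta x y -> beta (f x) (f y)) ->
  forall x y, beq x y -> beq (f x) (f y).
Proof.
  intros Hf x y H. induction H.
  - apply rst_step; auto.
  - apply rst_refl.
  - apply rst_sym; auto.
  - eapply rst_trans; eauto.
Qed.

Lemma beq_app a a' b b' : beq a a' -> beq b b' -> beq (App a b) (App a' b').
Proof.
  intros. apply rst_trans with (App a' b).
  apply (beq_map (fun x => App x b)); auto. intros; constructor; auto.
  apply (beq_map (fun x => App a' x)); auto. intros; constructor; auto.
Qed.

Lemma beq_lam a a' : beq a a' -> beq (Lam a) (Lam a').
Proof. apply (beq_map Lam). intros; constructor; auto. Qed.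

Lemma beta_inst a a' : beta a a' -> forall s, beta (inst s a) (inst s a').
Proof.
  induction 1; intros s; simpl; try (constructor; auto; fail).
  rewrite inst_subst0. constructor.
Qed.

Lemma beq_lift a a' d c : beq a a' -> beq (lift d c a) (lift d c a').
Proof.
  apply (beq_map (lift d c)). intros. rewrite !lift_ren, !ren_as_inst. apply beta_inst; auto.
Qed.

Lemma beq_sym a b : beq a b -> beq b a.
Proof. apply rst_sym. Qed.
Lemma beq_trans a b c : beq a b -> beq b c -> beq a c.
Proof. apply rst_trans. Qed.
Lemma beq_refl a : beq a a.
Proof. apply rst_refl. Qed.
Lemma beq_step a b : beta a b -> beq a b.
Proof. apply rst_step. Qed.

Lemma hstep_beta a a' : hstep a a' -> beta a a'.
Proof. induction 1; constructor; auto. Qed.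

Lemma hs_beq a a' : hs a a' -> beq a a'.
Proof. induction 1. apply beq_refl. eapply beq_trans; eauto. apply beq_step, hstep_beta; auto. Qed.

Definition unsolv M := exists M', beq M M' /\ inf_h M'.

Lemma unsolv_beq M N : beq M N -> unsolv N -> unsolv M.
Proof. intros H [M' [? ?]]. exists M'; split; auto. eapply beq_trans; eauto. Qed.

Lemma unsolv_lift M d c : unsolv M -> unsolv (lift d c M).
Proof.
  intros [M' [? ?]]. exists (lift d c M'). split. apply beq_lift; auto.
  rewrite lift_ren. apply inf_ren; auto.
Qed.

Lemma unsolv_nohnf M : unsolv M -> ~ has_hnf M.
Proof.
  intros [M' [Hb Hi]] [n [y [l H]]]. apply (hnf_not_inf M'); auto.
  exists n, y, l. eapply beq_trans; eauto. apply beq_sym; auto.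
Qed.

Lemma BTeq_refl : forall M, BTeq M M.
Proof.
  cofix CH. intros M. destruct (classic (has_hnf M)) as [[n [y [l H]]]|H].
  - apply (bt_node M M n y l l H H eq_refl). intros; apply CH.
  - apply bt_bot; auto.
Qed.

Lemma has_hnf_beq M N : beq M N -> has_hnf N -> has_hnf M.
Proof. intros H [n [y [l H']]]. exists n, y, l. eapply beq_trans; eauto. Qed.

Lemma beq_BTeq M N : beq M N -> BTeq M N.
Proof.
  intros H. destruct (classic (has_hnf M)) as [[n [y [l H1]]]|H1].
  - apply (bt_node M N n y l l H1). eapply beq_trans; [apply beq_sym; eauto|]; auto.
    auto. intros; apply BTeq_refl.
  - apply bt_bot; auto. intros H2. apply H1. eapply has_hnf_beq; eauto.
Qed.

Lemma beq_Bw M N : beq M N -> Bomega M N.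
Proof. intros; apply bw_B, beq_BTeq; auto. Qed.

Lemma hstep_closed a a' : hstep a a' -> forall k, closed_at k a -> closed_at k a'.
Proof.
  induction 1; intros k Hc; simpl in *.
  - destruct Hc. apply closed_subst0; auto.
  - destruct Hc; split; auto.
  - auto.
Qed.

Lemma hs_closed a a' k : hs a a' -> closed_at k a -> closed_at k a'.
Proof. induction 1; auto. intros; apply IHclos_refl_trans_1n. eapply hstep_closed; eauto. Qed.

Lemma inf_or_hnf P : inf_h P \/ exists G, hs P G /\ hnfS G.
Proof.
  destruct (classic (exists G, hs P G /\ hnfS G)) as [H|H]; auto. left.
  revert P H. cofix CH. intros P H.
  assert (Hp : hnfS P \/ exists P', hstep P P').
  { clear. induction P as [n|a IHa b IHb|a IHa].
    - left. exists 0, n, []. auto.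
    - destruct a as [n|a1 a2|a0].
      + left. exists 0, n, [b]. auto.
      + destruct IHa as [[k [y [l E]]]|[a' Ha]].
        * destruct k; simpl in E; try discriminate. left. exists 0, y, (l ++ [b]).
          simpl. rewrite apps_snoc, <- E. auto.
        * right. exists (App a' b). constructor; simpl; auto.
      + right. eexists. constructor.
    - destruct IHa as [[k [y [l E]]]|[a' Ha]].
      + left. exists (S k), y, l. simpl; f_equal; auto.
      + right. exists (Lam a'). constructor; auto. }
  destruct Hp as [Hp|[P' Hs]].
  - exfalso. apply H. exists P; split; auto. constructor.
  - apply (ih _ P' Hs). apply CH. intros [G [? ?]]. apply H. exists G; split; auto.
    econstructor; eauto.
Qed.
Lemma closed_Omega : closed_at 0 Omega.
Proof. simpl; repeat split; lia. Qed.

Lemma apps_step M M' l : hstep M M' -> notLam M -> hstep (apps M l) (apps M' l).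
Proof.
  revert M M'. induction l; intros M M' H N; simpl; auto.
  apply IHl. constructor; auto. simpl; auto.
Qed.

Lemma Omega_step : hstep Omega Omega.
Proof.
  assert (E : subst 0 omega_small (App (Var 0) (Var 0)) = Omega) by reflexivity.
  rewrite <- E at 2. unfold Omega at 1. constructor.
Qed.

Lemma inf_apps_Omega : forall l, inf_h (apps Omega l).
Proof.
  cofix CH. intros l. apply (ih _ (apps Omega l)).
  apply apps_step. apply Omega_step. simpl; auto. apply CH.
Qed.

Lemma app_Omega_S' j : forall M, app_Omega M (S j) = app_Omega (App M Omega) j.
Proof. induction j; intros; simpl; auto. rewrite <- IHj. reflexivity. Qed.

Lemma beq_appOmega M M' j : beq M M' -> beq (app_Omega M j) (app_Omega M' j).
Proof. induction j; simpl; auto. intros; apply beq_app; auto. apply beq_refl. Qed.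

Lemma app_Omega_apps m : forall l, exists l', app_Omega (apps Omega l) m = apps Omega l'.
Proof.
  induction m; intros l; simpl. exists l; auto.
  destruct (IHm l) as [l' ->]. exists (l' ++ [Omega]). rewrite apps_snoc. auto.
Qed.

Lemma subst_apps l : forall k u h, subst k u (apps h l) = apps (subst k u h) (map (subst k u) l).
Proof. induction l; intros; simpl; auto. Qed.

Definition headok k b := exists h l, b = apps h l /\ (h = Omega \/ exists i, h = Var i /\ i < k).

Lemma headok_red k : forall b m, headok k b -> exists l', beq (app_Omega (lams k b) (k + m)) (apps Omega l').
Proof.
  induction k; intros b m [h [l [-> Hh]]].
  - simpl. destruct Hh as [->|[i [_ Hi]]]; [|lia].
    destruct (app_Omega_apps m l) as [l' E]. exists l'. rewrite E. apply beq_refl.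
  - change (S k + m) with (S (k + m)). change (lams (S k) (apps h l)) with (Lam (lams k (apps h l))).
    rewrite app_Omega_S'.
    destruct (IHk (subst k Omega (apps h l)) m) as [l' Hl'].
    + rewrite subst_apps. exists (subst k Omega h), (map (subst k Omega) l). split; auto.
      destruct Hh as [->|[i [-> Hi]]].
      * left. apply (closed_subst _ 0); auto. apply closed_Omega. lia.
      * change (subst k Omega (Var i)) with (if i =? k then lift k 0 Omega else if k <? i then Var (pred i) else Var i).
        destruct (Nat.eqb_spec i k).
        -- left. apply (closed_lift _ 0). apply closed_Omega. lia.
        -- destruct (Nat.ltb_spec k i). lia. right. exists i; split; auto. lia.
    + exists l'. eapply beq_trans; [|exact Hl'].
      apply beq_appOmega. apply beq_step.
      replace (lams k (subst k Omega (apps h l))) with (subst 0 Omega (lams k (apps h l))).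
      constructor. rewrite subst_lams. f_equal. f_equal. lia.
Qed.

Lemma closed_lams k : forall j X, closed_at j (lams k X) -> closed_at (k + j) X.
Proof. induction k; intros; simpl in *; auto. replace (S (k + j)) with (k + S j) by lia. auto. Qed.

Lemma closed_apps_head l : forall k h, closed_at k (apps h l) -> closed_at k h.
Proof. induction l; intros k h H; simpl in *; auto. apply IHl in H. simpl in H. tauto. Qed.

Lemma inf_appOmega n : forall P, inf_h P -> inf_h (app_Omega P n).
Proof. induction n; intros; simpl; auto. apply inf_app; auto. Qed.

Lemma Panal P : closed P -> exists N0, forall n, N0 <= n -> forall R, unsolv (App (app_Omega P n) R).
Proof.
  intros HP. destruct (inf_or_hnf P) as [Hi|[G [HG [k [i [l ->]]]]]].
  - exists 0. intros n _ R. exists (App (app_Omega P n) R). split. apply beq_refl.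
    apply inf_app, inf_appOmega; auto.
  - exists k. intros n Hn R.
    assert (Hc : closed_at 0 (lams k (apps (Var i) l))) by (eapply hs_closed; eauto).
    apply closed_lams, closed_apps_head in Hc. simpl in Hc.
    destruct (headok_red k (apps (Var i) l) (n - k)) as [l' Hl'].
    { exists (Var i), l. split; auto. right. exists i. split; auto. lia. }
    replace (k + (n - k)) with n in Hl' by lia.
    exists (apps Omega (l' ++ [R])). split.
    + rewrite apps_snoc. apply beq_app; [|apply beq_refl].
      eapply beq_trans; [|exact Hl']. apply beq_appOmega. apply hs_beq; auto.
    + apply inf_apps_Omega.
Qed.
Lemma beta_redex' t u v : v = subst 0 u t -> beta (App (Lam t) u) v.
Proof. intros ->; constructor. Qed.

Lemma closed_church n : closed_at 0 (church n).
Proof.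
  simpl. induction n; simpl; auto.
Qed.

Lemma closed_Theta : closed_at 0 Theta.
Proof. simpl; repeat split; lia. Qed.

Lemma closed_succ : closed_at 0 church_succ.
Proof. simpl; repeat split; lia. Qed.

Lemma lift_pair d c M1 M2 : lift d c (pair M1 M2) = pair (lift d c M1) (lift d c M2).
Proof.
  unfold pair. cbn [lift]. rewrite !(lift_lift_comm _ d 1 c). reflexivity.
Qed.

Lemma subst_pair k u M1 M2 : subst k u (pair M1 M2) = pair (subst k u M1) (subst k u M2).
Proof.
  unfold pair. cbn [subst Nat.eqb Nat.ltb Nat.leb]. rewrite !(subst_lift_comm _ 1 k). reflexivity.
Qed.

Definition Tb G := Lam (Lam (pair (App (lift 2 0 G) (Var 0)) (App (Var 1) (App church_succ (Var 0))))).
Definition streamk G k := App (App Theta (Tb G)) (church k).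

Lemma lift_streamk d c G k : lift d c (streamk G k) = streamk (lift d c G) k.
Proof.
  unfold streamk, Tb. cbn [lift].
  rewrite (closed_lift Theta 0), (closed_lift (church k) 0), lift_pair; auto using closed_Theta, closed_church; try lia.
  cbn [lift Nat.leb]. rewrite (closed_lift church_succ 0); auto using closed_succ; try lia.
  rewrite (lift_lift_comm _ d 2 c). reflexivity.
Qed.

Lemma subst_streamk j u G k : subst j u (streamk G k) = streamk (subst j u G) k.
Proof.
  unfold streamk, Tb. cbn [subst].
  rewrite (closed_subst Theta 0), (closed_subst (church k) 0), subst_pair; auto using closed_Theta, closed_church; try lia.
  cbn [subst Nat.eqb Nat.ltb Nat.leb]. rewrite (closed_subst church_succ 0); auto using closed_succ; try lia.
  rewrite (subst_lift_comm _ 2 j). reflexivity.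
Qed.

Lemma iter1 k : subst 1 (Var 1) (Nat.iter k (App (Var 1)) (Var 0)) = Nat.iter k (App (Var 2)) (Var 0).
Proof. induction k; simpl; auto. rewrite IHk; auto. Qed.

Lemma iter2 k : subst 0 (Var 0) (Nat.iter k (App (Var 2)) (Var 0)) = Nat.iter k (App (Var 1)) (Var 0).
Proof. induction k; simpl; auto. rewrite IHk; auto. Qed.

Lemma succ_church k : beq (App church_succ (church k)) (church (S k)).
Proof.
  eapply beq_trans. apply beq_step. apply beta_redex'. reflexivity.
  cbn [subst Nat.eqb Nat.ltb]. rewrite (closed_lift (church k) 0); auto using closed_church.
  apply beq_lam, beq_lam, beq_app. apply beq_refl.
  eapply beq_trans. apply beq_step. apply beta_appL. apply beta_redex'. reflexivity.
  cbn [subst Nat.eqb Nat.ltb]. rewrite iter1.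
  apply beq_step. apply beta_redex'. rewrite iter2. reflexivity.
Qed.

Lemma beq_pair a a' b b' : beq a a' -> beq b b' -> beq (pair a b) (pair a' b').
Proof.
  intros. unfold pair. apply beq_lam. apply beq_app. apply beq_app. apply beq_refl.
  apply beq_lift; auto. apply beq_lift; auto.
Qed.

Lemma stream_unfold G k : beq (streamk G k) (pair (App G (church k)) (streamk G (S k))).
Proof.
  unfold streamk.
  eapply beq_trans. apply beq_step. apply beta_appL. apply beta_appL.
  apply (beta_redex' (Lam (App (Var 0) (App (App (Var 1) (Var 1)) (Var 0)))) Theta_half
       (Lam (App (Var 0) (App Theta (Var 0))))). reflexivity.
  eapply beq_trans. apply beq_step. apply beta_appL.
  apply (beta_redex' _ _ (App (Tb G) (App Theta (Tb G)))).
  { cbn [subst Nat.eqb Nat.ltb]. rewrite lift0, (closed_subst Theta 0); auto using closed_Theta. }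
  eapply beq_trans. apply beq_step. apply beta_appL. apply beta_redex'. reflexivity.
  eapply beq_trans. apply beq_step. apply beta_redex'. reflexivity.
  cbn [subst]. rewrite !subst_pair. cbn [subst Nat.eqb Nat.ltb Nat.leb].
  rewrite (subst_lift_cancel G 1 0 1) by lia. rewrite (subst_lift_cancel G 0 0 0) by lia.
  rewrite (subst_lift_cancel (App Theta (Tb G)) 0 0 0) by lia.
  rewrite !lift0.
  rewrite (closed_subst church_succ 0 1), (closed_subst church_succ 0 0); auto using closed_succ; try lia.
  apply beq_pair. apply beq_refl.
  apply beq_app. apply beq_refl. apply succ_church.
Qed.

Definition PairC := Lam (Lam (Lam (App (App (Var 0) (Var 2)) (Var 1)))).

Lemma pairC_beq a b : beq (App (App PairC a) b) (pair a b).
Proof.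
  eapply beq_trans. apply beq_step. apply beta_appL. apply beta_redex'. reflexivity.
  apply beq_step. apply beta_redex'. cbn [subst Nat.eqb Nat.ltb].
  rewrite (subst_lift_cancel a 1 0 1) by lia. reflexivity.
Qed.

Lemma tail_BT : forall M1 M2 G1 G2 k, M1 = streamk G1 k -> M2 = streamk G2 k ->
  (forall n, k <= n -> unsolv (App G1 (church n)) /\ unsolv (App G2 (church n))) -> BTeq M1 M2.
Proof.
  cofix CH. intros M1 M2 G1 G2 k E1 E2 H.
  apply (bt_node M1 M2 1 0 [lift 1 0 (App G1 (church k)); lift 1 0 (streamk G1 (S k))]
                           [lift 1 0 (App G2 (church k)); lift 1 0 (streamk G2 (S k))]).
  - subst. apply stream_unfold.
  - subst. apply stream_unfold.
  - reflexivity.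
  - intros i Hi. destruct i as [|[|i]].
    + cbn [nth]. apply bt_bot; apply unsolv_nohnf, unsolv_lift; apply H; lia.
    + cbn [nth]. apply (CH _ _ (lift 1 0 G1) (lift 1 0 G2) (S k)).
      * apply lift_streamk.
      * apply lift_streamk.
      * intros n Hn. rewrite <- (closed_lift (church n) 0 1 0) by (auto using closed_church).
        change (App (lift 1 0 ?g) (lift 1 0 ?c)) with (lift 1 0 (App g c)).
        split; apply unsolv_lift; apply H; lia.
    + simpl in Hi; lia.
Qed.

Lemma stream_main G1 G2 (A B : nat -> term) N0 :
  (forall n, beq (App G1 (church n)) (A n)) -> (forall n, beq (App G2 (church n)) (B n)) ->
  (forall n, Bomega (A n) (B n)) -> (forall n, N0 <= n -> unsolv (A n) /\ unsolv (B n)) ->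
  Bomega (streamk G1 0) (streamk G2 0).
Proof.
  intros HA HB HAB HU.
  assert (Ht : forall k, N0 <= k -> Bomega (streamk G1 k) (streamk G2 k)).
  { intros k Hk. apply bw_B. apply (tail_BT _ _ G1 G2 k); auto.
    intros n Hn. split; eapply unsolv_beq; eauto; apply HU; lia. }
  assert (forall j k, k + j = N0 -> Bomega (streamk G1 k) (streamk G2 k)).
  { induction j; intros k Hk. apply Ht; lia.
    specialize (IHj (S k) ltac:(lia)).
    eapply bw_trans. apply beq_Bw. eapply beq_trans. apply stream_unfold. apply beq_sym, pairC_beq.
    eapply bw_trans; [|apply beq_Bw; eapply beq_trans; [apply pairC_beq|apply beq_sym, stream_unfold]].
    apply bw_app; auto. apply bw_app. apply bw_refl.
    eapply bw_trans. apply beq_Bw, HA. eapply bw_trans. apply HAB. apply beq_Bw, beq_sym, HB. }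
  apply (H N0 0); lia.
Qed.
Lemma Bw_eta t : Bomega (Lam (App (lift 1 0 t) (Var 0))) t.
Proof.
  apply bw_omega. intros P HP. apply beq_Bw, beq_step, beta_redex'.
  cbn [subst Nat.eqb]. rewrite (subst_lift_cancel t 0 0 0) by lia. rewrite !lift0. reflexivity.
Qed.

Lemma eta_Bw a b : eta a b -> Bomega a b.
Proof.
  induction 1.
  - apply Bw_eta.
  - apply bw_app; auto. apply bw_refl.
  - apply bw_app; auto. apply bw_refl.
  - apply bw_lam; auto.
Qed.

Lemma bered_Bw a b : bered a b -> Bomega a b.
Proof.
  induction 1.
  - destruct H. apply beq_Bw, beq_step; auto. apply eta_Bw; auto.
  - apply bw_refl.
  - eapply bw_trans; eauto.
Qed.

Definition sub2 P Q X := subst 0 Q (subst 1 P X).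

Lemma beq_sub2 P Q X Y : beq X Y -> beq (sub2 P Q X) (sub2 P Q Y).
Proof.
  intros H.
  assert (E : forall Z, beq (App (App (Lam (Lam Z)) P) Q) (sub2 P Q Z)).
  { intros Z. eapply beq_trans. apply beq_step. apply beta_appL. apply beta_redex'. reflexivity.
    apply beq_step. apply beta_redex'. reflexivity. }
  eapply beq_trans. apply beq_sym, E. eapply beq_trans; [|apply E].
  apply beq_app; [|apply beq_refl]. apply beq_app; [|apply beq_refl]. apply beq_lam, beq_lam; auto.
Qed.

Lemma sub2_Var1 P Q : sub2 P Q (Var 1) = P.
Proof. unfold sub2. cbn [subst Nat.eqb]. rewrite (subst_lift_cancel P 0 0 0) by lia. apply lift0. Qed.

Lemma sub2_Var0 P Q : sub2 P Q (Var 0) = Q.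
Proof. unfold sub2. cbn [subst Nat.eqb Nat.ltb Nat.leb]. apply lift0. Qed.

Lemma sub2_closed P Q X : closed_at 0 X -> sub2 P Q X = X.
Proof. intros. unfold sub2. rewrite !(closed_subst X 0); auto; lia. Qed.

Lemma sub2_app P Q a b : sub2 P Q (App a b) = App (sub2 P Q a) (sub2 P Q b).
Proof. reflexivity. Qed.

Lemma sub2_appOmega P Q X n : sub2 P Q (app_Omega X n) = app_Omega (sub2 P Q X) n.
Proof.
  induction n; simpl; auto. rewrite sub2_app, IHn, (sub2_closed P Q Omega); auto. apply closed_Omega.
Qed.

Lemma sub2_stream P Q F : sub2 P Q (stream F) = streamk (sub2 P Q F) 0.
Proof. unfold sub2. change (stream F) with (streamk F 0). rewrite !subst_streamk. reflexivity. Qed.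

Theorem mainTheorem12
  (etas : nat -> term)
  (Heff : effective etas)
  (Hcl : forall i, closed (etas i))
  (Hred : forall i, bered (etas i) I_comb)
  (IO EO : term)
  (HIOc : closed IO) (HEOc : closed EO)
  (HIO : exists F, closed_at 2 F /\
           (forall n, beq (App F (church n)) (App (app_Omega (Var 1) n) (Var 0))) /\
           beq (App (App IO (Var 1)) (Var 0)) (stream F))
  (HEO : exists F, closed_at 2 F /\
           (forall n, beq (App F (church n))
                          (App (app_Omega (Var 1) n) (App (etas n) (Var 0)))) /\
           beq (App (App EO (Var 1)) (Var 0)) (stream F)) :
  Bomega IO EO.
Proof.
  destruct HIO as [FI [_ [HFI HSI]]], HEO as [FE [_ [HFE HSE]]].
  apply bw_omega; intros P HP. apply bw_omega; intros Q HQ.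
  apply beq_sub2 with (P := P) (Q := Q) in HSI, HSE.
  rewrite !sub2_app, sub2_Var0, sub2_Var1, sub2_closed, sub2_stream in HSI, HSE by auto.
  eapply bw_trans. apply beq_Bw, HSI.
  eapply bw_trans; [|apply beq_Bw, beq_sym, HSE].
  destruct (Panal P HP) as [N0 HN0].
  apply (stream_main _ _ (fun n => App (app_Omega P n) Q) (fun n => App (app_Omega P n) (App (etas n) Q)) N0).
  - intros n. specialize (HFI n). apply beq_sub2 with (P := P) (Q := Q) in HFI.
    rewrite !sub2_app, sub2_appOmega, sub2_Var0, sub2_Var1, (sub2_closed _ _ (church n)) in HFI
      by apply closed_church. auto.
  - intros n. specialize (HFE n). apply beq_sub2 with (P := P) (Q := Q) in HFE.
    rewrite !sub2_app, sub2_appOmega, sub2_Var0, sub2_Var1, (sub2_closed _ _ (church n)),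
      (sub2_closed _ _ (etas n)) in HFE by (apply closed_church || apply Hcl). auto.
  - intros n. apply bw_app. apply bw_refl. apply bw_sym.
    eapply bw_trans. apply bw_app. apply bered_Bw, Hred. apply bw_refl.
    apply beq_Bw, beq_step, beta_redex'. cbn [subst Nat.eqb]. symmetry; apply lift0.
  - intros n Hn; split; apply HN0; auto.
Qed.
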